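(* Let $\alpha,b,\beta>0$ with $\alpha<\frac d2$, and let $x_1,\dots,x_n\in\mathbb{R}^d$ span $\mathbb{R}^d$ and satisfy, for every subspace $L\subset\mathbb{R}^d$ of dimension $1\le d_L<d$, $$\frac{|\{i: x_i\in L\}|}{n}<\frac{d_L}{d-2\alpha}.$$ Then the Kotz log-likelihood $\mathcal{L}(S)=-\frac n2\log\det S+\sum_{i=1}^n\log\varphi(x_i^TS^{-1}x_i)$ with $\varphi(t)=t^{\alpha-d/2}\exp(-(t/b)^\beta)$ attains its maximum over $S\in\mathbb{P}_d$.
   Context: $\mathbb{P}_d$ denotes $d\times d$ real symmetric positive definite matrices. *)

(* Defs.v *)
From HB Require Import structures.
From mathcomp Require Import all_boot all_order all_algebra.
From mathcomp Require Import all_classical all_reals all_analysis.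
Set Implicit Arguments. Unset Strict Implicit. Unset Printing Implicit Defensive.
Import Order.TTheory GRing.Theory Num.Theory.
Local Open Scope ring_scope.

Definition posdef (R : realType) (d : nat) (S : 'M[R]_d) : Prop :=
  S^T = S /\ forall v : 'rV[R]_d, v != 0 -> 0 < (v *m S *m v^T) 0 0.

Definition kotz_phi (R : realType) (d : nat) (alpha b beta : R) (t : R) : R :=
  t `^ (alpha - d%:R / 2) * expR (- ((t / b) `^ beta)).

(* Kotz log-likelihood; the data x_1..x_n are the rows of X *)
Definition kotz_loglik (R : realType) (d n : nat) (alpha b beta : R)
    (X : 'M[R]_(n, d)) (S : 'M[R]_d) : R :=
  - (n%:R / 2) * ln (\det S)
  + \sum_(i < n) ln (kotz_phi d alpha b beta ((row i X *m invmx S *m (row i X)^T) 0 0)).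

(* Main.v *)
Require Import Defs.
From HB Require Import structures.
From mathcomp Require Import all_boot all_order all_algebra.
From mathcomp Require Import all_classical all_reals all_analysis.
From mathcomp Require Import ring lra zify.
From mathcomp Require polyrcf.
From mathcomp Require Import perm.
Import Order.TTheory GRing.Theory Num.Theory.
Import numFieldTopology.Exports numFieldNormedType.Exports.
Local Open Scope ring_scope.

Module Aux.
Set Implicit Arguments. Unset Strict Implicit. Unset Printing Implicit Defensive.

Section Scalar.
Variable R : realType.

Lemma scal_bound (c k beta b : R) : 0 < c -> 0 < k -> 0 < beta -> 0 < b ->
  exists K, forall t, 0 < t -> c * ln t - k * expR (beta * ln (t / b)) <= K.
Proof.
move=> c0 k0 be0 b0.
set mu := ln (c / (k * beta)).
exists (c * ln b + c / beta * (mu - 1)) => t t0.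
set y := ln (t / b).
have lnt : ln t = y + ln b by rewrite /y ln_div ?posrE // subrK.
have emu : expR mu = c / (k * beta) by rewrite /mu lnK // posrE divr_gt0 // mulr_gt0.
have ey : expR (beta * y) = expR (beta * y - mu) * expR mu by rewrite -expRD subrK.
set E := expR (beta * y - mu).
have hE : 1 + (beta * y - mu) <= E := expR_ge1Dx _.
rewrite lnt ey emu.
have -> : k * (E * (c / (k * beta))) = E * (c / beta).
  by field; rewrite gt_eqF ?gt_eqF //.
set q := c / beta.
have cq : c = q * beta by rewrite /q divfK // gt_eqF.
rewrite cq.
have q0 : 0 < q by rewrite /q divr_gt0.
have : 0 <= q * (E - (1 + (beta * y - mu))) by apply: mulr_ge0; [exact: ltW | rewrite subr_ge0].
lra.
Qed.

End Scalar.

Section PD.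
Variable R : realType.
Variable d : nat.
Implicit Types (V : 'M[R]_d) (x y v w : 'rV[R]_d).

Definition qf V x y : R := (x *m V *m y^T) 0 0.

Lemma qf_sym V x y : V^T = V -> qf V x y = qf V y x.
Proof.
move=> VT; rewrite /qf.
rewrite -[in LHS](trmxK (x *m V *m y^T)) [in LHS]mxE.
by rewrite !trmx_mul trmxK VT mulmxA.
Qed.

Lemma qfDl V x y z : qf V (x + y) z = qf V x z + qf V y z.
Proof. by rewrite /qf !mulmxDl mxE. Qed.
Lemma qfDr V x y z : qf V z (x + y) = qf V z x + qf V z y.
Proof. by rewrite /qf linearD /= mulmxDr mxE. Qed.
Lemma qfZl V a x y : qf V (a *: x) y = a * qf V x y.
Proof. by rewrite /qf -!scalemxAl mxE. Qed.
Lemma qfZr V a x y : qf V y (a *: x) = a * qf V y x.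
Proof. by rewrite /qf linearZ /= -scalemxAr mxE. Qed.
Lemma qf0r V x : qf V x 0 = 0.
Proof. by rewrite /qf trmx0 mulmx0 mxE. Qed.
Lemma qf0l V x : qf V 0 x = 0.
Proof. by rewrite /qf !mul0mx mxE. Qed.

Lemma qf_expand V x y l : V^T = V ->
  qf V (x + l *: y) (x + l *: y) = qf V x x + 2 * l * qf V x y + l ^+ 2 * qf V y y.
Proof.
move=> VT; rewrite qfDl !qfDr !qfZl !qfZr (qf_sym x y VT).
by rewrite expr2; ring.
Qed.

Lemma posdef_ge0 V v : posdef V -> 0 <= qf V v v.
Proof.
case=> _ H; have [->|v0] := eqVneq v 0; first by rewrite qf0r.
exact/ltW/H.
Qed.

Lemma posdef_gt0 V v : posdef V -> v != 0 -> 0 < qf V v v.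
Proof. by case=> _ H; apply: H. Qed.

Lemma posdef_CS V x y : posdef V -> qf V x y ^+ 2 <= qf V x x * qf V y y.
Proof.
move=> pV; have [->|y0] := eqVneq y 0; first by rewrite !qf0r expr0n /= mulr0.
have C0 := posdef_gt0 pV y0.
set A := qf V x x; set B := qf V x y; set C := qf V y y.
have := posdef_ge0 (x + (- B / C) *: y) pV.
rewrite qf_expand; last by case: pV.
rewrite -/A -/B -/C => h.
have e : A + 2 * (- B / C) * B + (- B / C) ^+ 2 * C = A - B ^+ 2 / C.
  by field; rewrite gt_eqF.
rewrite e subr_ge0 ler_pdivrMr // in h.
Qed.

Lemma psd_unit_posdef V : V^T = V -> (forall v, 0 <= qf V v v) -> V \in unitmx ->
  posdef V.
Proof.
move=> VT psd U; split => // v v0.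
rewrite -/(qf V v v) lt_def psd andbT; apply/negP => /eqP q0.
have B0 w : qf V v w = 0.
  set B := qf V v w; set C := qf V w w.
  have C0 : 0 <= C := psd w.
  have := psd (v + (- B / (C + 1)) *: w).
  rewrite qf_expand // q0 -/B -/C => h.
  have e : 0 + 2 * (- B / (C + 1)) * B + (- B / (C + 1)) ^+ 2 * C
     = - (B ^+ 2 * (C + 2)) / (C + 1) ^+ 2.
    by field; rewrite gt_eqF // ltr_wpDl.
  rewrite e pmulr_lge0 ?invr_gt0 ?exprn_gt0 ?ltr_wpDl // oppr_ge0 in h.
  have : 0 <= B ^+ 2 * (C + 2) by rewrite mulr_ge0 // ?sqr_ge0 ?addr_ge0.
  move=> h2; have : B ^+ 2 * (C + 2) = 0 by apply/eqP; rewrite eq_le h h2.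
  move/eqP; rewrite mulf_eq0 expf_eq0 /= (gt_eqF (ltr_wpDl C0 _)) ?orbF //.
  by move/eqP.
have vV : v *m V = 0.
  apply/rowP => j; rewrite !mxE.
  have := B0 (delta_mx 0 j); rewrite /qf.
  rewrite mxE (bigD1 j) //= big1 ?addr0; last first.
    by move=> k kj; rewrite !mxE (negbTE kj) andbF mulr0.
  by rewrite !mxE !eqxx mulr1.
move: v0; rewrite -(mulmxK U v) vV mul0mx eqxx.
by [].
Qed.

Lemma posdef_unit V : posdef V -> V \in unitmx.
Proof.
move=> pV; rewrite -row_free_unit -kermx_eq0; apply/eqP/row_matrixP => i.
rewrite row0; apply/eqP; apply/negPn/negP => ri0.
have := posdef_gt0 pV ri0.
have h : row i (kermx V) *m V = 0 by apply/eqP; rewrite -sub_kermx row_sub.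
by rewrite /qf h mul0mx mxE ltxx.
Qed.

Lemma qf_shift V (mu : R) v : qf (mu%:M + V) v v = mu * (v *m v^T) 0 0 + qf V v v.
Proof. by rewrite /qf mulmxDr mulmxDl mul_mx_scalar -scalemxAl !mxE. Qed.

Lemma vvT_ge0 v : 0 <= (v *m v^T) 0 0.
Proof. by rewrite mxE; apply: sumr_ge0 => j _; rewrite mxE -expr2 sqr_ge0. Qed.

Lemma vvT_gt0 v : v != 0 -> 0 < (v *m v^T) 0 0.
Proof.
move=> v0; rewrite lt_def vvT_ge0 andbT; apply/negP => /eqP h.
move: v0; rewrite mxE in h; have: forall j, v 0 j = 0.
  move=> j; have /eqP := h; rewrite psumr_eq0 => [/allP/(_ j)|].
    by rewrite mem_index_enum /= mxE -expr2 sqrf_eq0 => /(_ isT)/eqP.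
  by move=> k _; rewrite mxE -expr2 sqr_ge0.
move=> hv; suff -> : v = 0 by rewrite eqxx.
by apply/rowP => j; rewrite hv mxE.
Qed.

Lemma posdef_shift V (mu : R) : posdef V -> 0 <= mu -> posdef (mu%:M + V).
Proof.
move=> pV mu0; split.
  by rewrite linearD /= tr_scalar_mx; case: pV => -> _.
move=> v v0; rewrite -/(qf _ v v) qf_shift.
by apply: ltr_wpDl; [apply: mulr_ge0 => //; exact: vvT_ge0| exact: posdef_gt0].
Qed.

Lemma posdef1 : posdef (1%:M : 'M[R]_d).
Proof.
split; first by rewrite tr_scalar_mx.
by move=> v v0; rewrite mulmx1; exact: vvT_gt0.
Qed.

Lemma posdef_det_gt0 V : posdef V -> 0 < \det V.
Proof.
move=> pV.
pose p := char_poly (- V).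
have hp (mu : R) : p.[mu] = \det (mu%:M + V).
  rewrite /p /char_poly -horner_evalE -det_map_mx; congr (\det _).
  apply/matrixP => i j; rewrite !mxE /= horner_evalE.
  by rewrite hornerD hornerN hornerMn hornerX hornerC opprK.
have nr : {in `[0, +oo[, forall z : R, ~~ root p z}.
  move=> z; rewrite in_itv /= andbT => z0; rewrite /root hp.
  have := posdef_unit (posdef_shift pV z0).
  by rewrite unitmxE unitfE.
have := polyrcf.sgp_pinftyP nr; move=> /(_ 0); rewrite in_itv /= lexx => /(_ isT).
rewrite /polyrcf.sgp_pinfty (monicP (char_poly_monic _)) sgr1 hp -scalemx1 scale0r add0r.
by move=> h; rewrite -sgr_gt0 h ltr01.
Qed.

Lemma posdef_inv V : posdef V -> posdef (invmx V).
Proof.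
move=> pV; have U := posdef_unit pV; case: (pV) => VT _; split.
  by rewrite trmx_inv VT.
move=> v v0; set w := v *m invmx V.
have w0 : w != 0.
  apply: contraNneq v0 => h; by rewrite -(mulmxKV U v) -/w h mul0mx.
have := posdef_gt0 pV w0.
rewrite /qf /w trmx_mul trmx_inv VT.
by rewrite -!mulmxA (mulmxA V) mulmxV // mul1mx.
Qed.

Lemma gram_entry V (Y : 'M[R]_d) i j :
  (Y *m V *m Y^T) i j = qf V (row i Y) (row j Y).
Proof.
rewrite /qf -row_mul !mxE; apply: eq_bigr => k _; rewrite !mxE.
by [].
Qed.

Lemma det_gram_le V (Y : 'M[R]_d) : posdef V ->
  \det (Y *m V *m Y^T) <= d`!%:R * \prod_k qf V (row k Y) (row k Y).
Proof.
move=> pV; set A := Y *m V *m Y^T.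
set c := \prod_k qf V (row k Y) (row k Y).
have c0 : 0 <= c by apply: prodr_ge0 => k _; exact: posdef_ge0.
have Aii i : A i i = qf V (row i Y) (row i Y) by rewrite /A gram_entry.
rewrite [\det _]/determinant.
apply: (@le_trans _ _ (\sum_(s : 'S_d) c)).
  apply: ler_sum => s _; apply: le_trans (ler_norm _) _.
  rewrite normrM normrX normrN1 expr1n mul1r.
  have h1 : 0 <= `|\prod_i A i (s i)| by [].
  rewrite -(ler_pXn2r (n:=2)) ?nnegrE //.
  rewrite normr_prod -prodrXl.
  have -> : c ^+ 2 = \prod_i (A i i * A (s i) (s i)).
    rewrite big_split /= expr2; congr (_ * _); first by apply: eq_bigr => i _; rewrite Aii.
    rewrite /c (reindex_inj (@perm_inj _ s)) /=.
    by apply: eq_bigr => i _; rewrite Aii.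
  apply: ler_prod => i _; rewrite sqr_ge0 /= real_normK ?num_real //.
  by rewrite /A !gram_entry posdef_CS.
rewrite sumr_const card_Sn.
by rewrite mulr_natl.
Qed.
End PD.

Section Greedy.
Variable R : realType.
Variables n d : nat.
Variable X : 'M[R]_(n, d).

Definition MJ (J : {set 'I_n}) : 'M[R]_(n, d) :=
  \matrix_(i, j) (if i \in J then X i j else 0).
Definition rk J := \rank (MJ J).

Lemma row_MJ i (J : {set 'I_n}) : row i (MJ J) = if i \in J then row i X else 0.
Proof. by apply/rowP => j; rewrite !mxE; case: (i \in J); rewrite ?mxE. Qed.

Lemma MJ_sub m (J : {set 'I_n}) (A : 'M[R]_(m, d)) :
  (forall i, i \in J -> (row i X <= A)%MS) -> (MJ J <= A)%MS.
Proof.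
move=> h; apply/row_subP => i; rewrite row_MJ.
by case: ifP => iJ; [exact: h | exact: sub0mx].
Qed.

Lemma row_sub_MJ i (J : {set 'I_n}) : i \in J -> (row i X <= MJ J)%MS.
Proof. by move=> iJ; rewrite -[row i X](_ : row i (MJ J) = _) ?row_sub // row_MJ iJ. Qed.

Lemma MJS (J1 J2 : {set 'I_n}) : J1 \subset J2 -> (MJ J1 <= MJ J2)%MS.
Proof. by move=> /fintype.subsetP s12; apply: MJ_sub => i /s12; exact: row_sub_MJ. Qed.

Lemma rk0 : rk finset.set0 = 0%N.
Proof.
rewrite /rk (_ : MJ finset.set0 = 0) ?mxrank0 //.
by apply/matrixP => i j; rewrite !mxE inE.
Qed.

Lemma rk_step (J : {set 'I_n}) m : m \in J -> rk J = rk (J :\ m) \/ rk J = (rk (J :\ m)).+1.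
Proof.
move=> mJ.
have h1 : (rk (J :\ m) <= rk J)%N by apply: mxrankS; apply: MJS; exact: subsetDl.
have h2 : (rk J <= rk (J :\ m) + 1)%N.
  have : (MJ J <= MJ (J :\ m) + row m X)%MS.
    apply: MJ_sub => i iJ; have [->|im] := eqVneq i m; first exact: addsmxSr.
    apply: submx_trans (addsmxSl _ _); apply: row_sub_MJ.
    by rewrite !inE im.
  move/mxrankS => h; apply: leq_trans h _.
  apply: leq_trans (mxrank_adds_leqif _ _).1 _.
  by rewrite leq_add2l rank_leq_row.
lia.
Qed.

Lemma greedy (s : 'I_n -> R) (w : R) :
  (forall J : {set 'I_n}, w * #|J|%:R <= (rk J)%:R) ->
  forall (J : {set 'I_n}) M, (forall i, i \in J -> s i <= M) ->
  exists B : {set 'I_n}, [/\ B \subset J, #|B| = rk J, rk B = #|B| &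
      \sum_(i in B) s i <= w * \sum_(i in J) s i + ((rk J)%:R - w * #|J|%:R) * M].
Proof.
move=> hw J; have [k] := ubnP #|J|; elim: k J => // k IH J hJ M hM.
have [->|[i0 i0J]] := set_0Vmem J.
  exists finset.set0; rewrite finset.sub0set cards0 rk0 !big_set0; split => //.
  by rewrite !mulr0 subr0 mul0r addr0.
pose m := [arg max_(i > i0 in J) s i]%O.
have [mJ maxm] : m \in J /\ forall i, i \in J -> s i <= s m.
  by rewrite /m; case: arg_maxP => // j jJ h; split => // i /h.
set J' := J :\ m.
have cJ : #|J| = (#|J'|).+1 by rewrite (cardsD1 m J) mJ.
have hJ' : (#|J'| < k)%N by move: hJ; rewrite cJ.
have [B' [sB' cB' rB' sumB']] := IH J' hJ' (s m) (fun i iJ => maxm i (fintype.subsetP (subsetDl _ _) i iJ)).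
have sJ : \sum_(i in J) s i = s m + \sum_(i in J') s i by rewrite (big_setD1 m).
have coef0 : 0 <= (rk J)%:R - w * #|J|%:R by rewrite subr_ge0.
have sM : s m <= M by exact: hM.
have hmul : ((rk J)%:R - w * #|J|%:R) * s m <= ((rk J)%:R - w * #|J|%:R) * M.
  by rewrite ler_wpM2l.
have sBJ : B' \subset J by apply: fintype.subset_trans sB' (subsetDl _ _).
have [e|e] := rk_step mJ.
  exists B'; split => //; first by rewrite e -/J'.
  move: sumB' hmul; rewrite sJ cJ e -/J' -!natr1.
  set S' := \sum_(i in J') s i; set a : R := (rk J')%:R; set c : R := (#|J'|)%:R.
  move=> h1 h2.
  have eq1 : w * (s m + S') + (a - w * (c + 1)) * s m = w * S' + (a - w * c) * s m.
    by ring.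
  lra.
have mB' : m \notin B'.
  by apply/negP => /(fintype.subsetP sB'); rewrite !inE eqxx.
have cB : #|m |: B'| = (rk J).
  by rewrite cardsU1 mB' cB' e -/J' add1n.
exists (m |: B'); split => //.
- by rewrite finset.subUset finset.sub1set mJ sBJ.
- rewrite cB /rk; apply/eqP; rewrite eqn_leq; apply/andP; split.
    by apply: mxrankS; apply: MJS; rewrite finset.subUset finset.sub1set mJ sBJ.
  apply: mxrankS; apply: MJ_sub => i iJ.
  have [->|im] := eqVneq i m; first by apply: row_sub_MJ; rewrite !inE eqxx.
  have iJ' : i \in J' by rewrite !inE im.
  have eqB : (MJ B' == MJ J')%MS.
    have := mxrank_leqif_eq (MJS sB'); rewrite -/(rk B') -/(rk J') rB' cB'.
    by move=> [_ <-].
  apply: submx_trans (row_sub_MJ iJ') _.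
  case/andP: eqB => _ hJB; apply: submx_trans hJB _.
  by apply: MJS; exact: finset.subsetUr.
- rewrite big_setU1 //=.
  move: sumB' hmul; rewrite sJ cJ e -/J' -!natr1.
  set S' := \sum_(i in J') s i; set a : R := (rk J')%:R; set c : R := (#|J'|)%:R.
  set SB := \sum_(i in B') s i.
  move=> h1 h2.
  have eq1 : w * (s m + S') + (a + 1 - w * (c + 1)) * s m = w * S' + (a - w * c) * s m + s m.
    by ring.
  lra.
Qed.

End Greedy.

Section Cont.
Local Open Scope classical_set_scope.
Variable R : realType.
Variable T : topologicalType.

Lemma cont_sum (I : Type) (r : seq I) (P : pred I) (F : I -> T -> R) (x : T) :
  (forall i, {for x, continuous (F i)}) ->
  {for x, continuous (fun y => \sum_(i <- r | P i) F i y)}.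
Proof.
move=> h; elim: r => [|a r IH].
  by rewrite (_ : (fun _ => _) = (fun _ => 0)); [exact: cst_continuous|
     apply: funext => y; rewrite big_nil].
rewrite (_ : (fun _ => _) = (fun y => (if P a then F a y else 0) + \sum_(i <- r | P i) F i y)); last first.
  by apply: funext => y; rewrite big_cons; case: (P a); rewrite ?add0r.
apply: continuousD => //; case: (P a) => //; exact: cst_continuous.
Qed.

Lemma cont_prod (I : Type) (r : seq I) (P : pred I) (F : I -> T -> R) (x : T) :
  (forall i, {for x, continuous (F i)}) ->
  {for x, continuous (fun y => \prod_(i <- r | P i) F i y)}.
Proof.
move=> h; elim: r => [|a r IH].
  by rewrite (_ : (fun _ => _) = (fun _ => 1)); [exact: cst_continuous|
     apply: funext => y; rewrite big_nil].
rewrite (_ : (fun _ => _) = (fun y => (if P a then F a y else 1) * \prod_(i <- r | P i) F i y)); last first.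
  by apply: funext => y; rewrite big_cons; case: (P a); rewrite ?mul1r.
apply: continuousM => //; case: (P a) => //; exact: cst_continuous.
Qed.

Lemma cont_ln (f : T -> R) (x : T) : {for x, continuous f} -> 0 < f x ->
  {for x, continuous (fun y => ln (f y))}.
Proof. by move=> cf fx; apply: continuous_comp => //; exact: continuous_ln. Qed.

Lemma cont_expR (f : T -> R) (x : T) : {for x, continuous f} ->
  {for x, continuous (fun y => expR (f y))}.
Proof. by move=> cf; apply: continuous_comp => //; exact: continuous_expR. Qed.

Lemma cont_norm (f : T -> R) (x : T) : {for x, continuous f} ->
  {for x, continuous (fun y => `|f y|)}.
Proof. by move=> cf; apply: continuous_comp => //; exact: norm_continuous. Qed.

Lemma cont_scale (c : R) (f : T -> R) (x : T) : {for x, continuous f} ->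
  {for x, continuous (fun y => c * f y)}.
Proof. by move=> cf; apply: continuousM => //; exact: cst_continuous. Qed.

Lemma closed_ge0 (I : Type) (h : I -> T -> R) :
  (forall i, continuous (h i)) -> closed [set y | forall i, 0 <= h i y].
Proof.
move=> ch.
rewrite (_ : [set y | _] = \bigcap_(i in setT) (h i @^-1` [set z | 0 <= z])).
  apply: closed_bigI => i _; apply: (proj1 (continuous_closedP _) (ch i)).
  exact: closed_ge.
apply/seteqP; split => y /= H i.
  by move=> _; exact: H.
by apply: H.
Qed.
End Cont.

Section Help.
Variable R : realType.

Lemma ln_prod (I : Type) (r : seq I) (P : pred I) (F : I -> R) :
  (forall i, P i -> 0 < F i) ->
  ln (\prod_(i <- r | P i) F i) = \sum_(i <- r | P i) ln (F i).
Proof.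
move=> hF; elim: r => [|a r IH]; first by rewrite !big_nil ln1.
rewrite !big_cons; case: ifP => Pa //.
by rewrite lnM ?posrE ?hF // ?IH // prodr_gt0.
Qed.

Lemma le_sum_single (I : finType) (F : I -> R) j :
  (forall i, 0 <= F i) -> F j <= \sum_i F i.
Proof.
move=> h; rewrite (bigD1 j) //= lerDl; apply: sumr_ge0 => i _; exact: h.
Qed.

Lemma sqr_pos (x : R) : x != 0 -> 0 < x ^+ 2.
Proof. by move=> x0; rewrite lt_def sqr_ge0 sqrf_eq0 x0. Qed.
End Help.

Section Main.
Variable R : realType.
Variables d n : nat.
Variables alpha b beta : R.
Variable X : 'M[R]_(n, d).
Hypothesis a0 : 0 < alpha.
Hypothesis b0 : 0 < b.
Hypothesis be0 : 0 < beta.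
Hypothesis ad : alpha < d%:R / 2.
Hypothesis rX0 : forall i : 'I_n, row i X != 0.
Hypothesis rX : \rank X = d.
Hypothesis hL : forall L : 'M[R]_d, (1 <= \rank L)%N -> (\rank L < d)%N ->
     #|[set i : 'I_n | (row i X <= L)%MS]|%:R / n%:R
       < (\rank L)%:R / (d%:R - 2 * alpha).

Definition tt (V : 'M[R]_d) i := qf V (row i X) (row i X).
Definition uu (V : 'M[R]_d) i := expR (beta * ln (tt V i / b)).
Definition aa := alpha - d%:R / 2.
Definition FF (V : 'M[R]_d) :=
  (n%:R / 2) * ln (\det V) + \sum_i (aa * ln (tt V i) - uu V i).

Lemma tt_gt0 V i : posdef V -> 0 < tt V i.
Proof. by move=> pV; apply: posdef_gt0. Qed.

Lemma uu_gt0 V i : 0 < uu V i.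
Proof. exact: expR_gt0. Qed.

Lemma loglik_F T : posdef T -> kotz_loglik alpha b beta X T = FF (invmx T).
Proof.
move=> pT; have pI := posdef_inv pT.
rewrite /kotz_loglik /FF det_inv lnV ?posrE ?posdef_det_gt0 //.
rewrite mulrN -mulNr; congr (_ + _); apply: eq_bigr => i _.
rewrite -/(qf (invmx T) (row i X) (row i X)) -/(tt (invmx T) i).
have t0 := tt_gt0 i pI.
rewrite /kotz_phi lnM ?posrE ?powR_gt0 ?expR_gt0 // expRK ln_powR.
rewrite /powR (gt_eqF (divr_gt0 t0 b0)) /uu /aa.
by [].
Qed.


Lemma d_pos : (0 < d)%N.
Proof.
case: d ad => //= h; exfalso; move: h; rewrite mul0r => h.
by move: (lt_trans a0 h); rewrite ltxx.
Qed.

Lemma n_pos : (0 < n)%N.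
Proof. by apply: leq_trans d_pos _; rewrite -rX rank_leq_row. Qed.

Lemma Dpos : 0 < d%:R - 2 * alpha.
Proof. by rewrite subr_gt0 -ltr_pdivlMl // mulrC. Qed.

Lemma frac_lt (x y p q : R) : 0 < p -> 0 < q -> (x / p < y / q) = (x * q < y * p).
Proof.
move=> p0 q0; rewrite ltr_pdivlMr // mulrAC ltr_pdivrMr //.
Qed.

Lemma rk_le_d J : (rk X J <= d)%N.
Proof. exact: rank_leq_col. Qed.

Lemma rk_pos (J : {set 'I_n}) i : i \in J -> (0 < rk X J)%N.
Proof.
move=> iJ; have h := mxrankS (row_sub_MJ X iJ); apply: leq_trans h.
by rewrite lt0n mxrank_eq0 rX0.
Qed.

Lemma rkT : rk X [set: 'I_n] = d.
Proof.
rewrite /rk (_ : MJ X _ = X) //.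
by apply/matrixP => i j; rewrite !mxE inE.
Qed.

Lemma exists_w : exists w, [/\ (d%:R - 2 * alpha) / n%:R < w, n%:R * w < d%:R &
  forall J : {set 'I_n}, w * #|J|%:R <= (rk X J)%:R].
Proof.
have n0 : 0 < n%:R :> R by rewrite ltr0n n_pos.
set w0 := (d%:R - 2 * alpha) / n%:R.
set m := \big[Order.min/(d%:R / n%:R)]_(J : {set 'I_n} | #|J| != 0%N)
            ((rk X J)%:R / #|J|%:R : R).
have w0dn : w0 < d%:R / n%:R.
  by rewrite /w0 ltr_pM2r ?invr_gt0 // gtrBl mulr_gt0.
have w0m : w0 < m.
  apply: lt_bigmin => // J J0.
  have cJ : 0 < #|J|%:R :> R by rewrite ltr0n lt0n.
  have [i iJ] : exists i, i \in J.
    by move: J0; rewrite cards_eq0 => /set0Pn.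
  have [rd|rd] := ltnP (rk X J) d.
    have rL : \rank <<MJ X J>>%MS = rk X J by rewrite genmxE.
    have := hL (L := <<MJ X J>>%MS); rewrite rL => /(_ (rk_pos iJ) rd) h.
    have cle : (#|J| <= #|[set i : 'I_n | (row i X <= <<MJ X J>>)%MS]|)%N.
      apply: subset_leq_card; apply/fintype.subsetP => k kJ.
      by rewrite inE genmxE row_sub_MJ.
    have h2 : #|J|%:R / n%:R < (rk X J)%:R / (d%:R - 2 * alpha).
      apply: le_lt_trans h; rewrite ler_pM2r ?invr_gt0 // ler_nat //.
    rewrite /w0 frac_lt // mulrC.
    by move: h2; rewrite frac_lt // ?Dpos // mulrC.
  have rdd : rk X J = d by apply/eqP; rewrite eqn_leq rk_le_d rd.
  rewrite rdd; apply: lt_le_trans w0dn _.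
  rewrite ler_pM2l ?ltr0n ?d_pos // lef_pV2 ?posrE // ler_nat.
  by apply: leq_trans (max_card J) _; rewrite card_ord.
set w := (w0 + m) / 2.
have mdn : m <= d%:R / n%:R by apply: bigmin_le_id.
exists w; split.
- by rewrite /w; lra.
- rewrite -ltr_pdivlMl // mulrC; apply: lt_le_trans mdn.
  by rewrite /w; lra.
- move=> J; have [J0|J0] := eqVneq #|J| 0%N.
    by rewrite J0 mulr0 ler0n.
  have cJ : 0 < #|J|%:R :> R by rewrite ltr0n lt0n.
  rewrite -ler_pdivlMr //.
  have : m <= (rk X J)%:R / #|J|%:R by apply: bigmin_le_cond.
  by rewrite /w; lra.
Qed.


Lemma lndet_bound w : (forall J : {set 'I_n}, w * #|J|%:R <= (rk X J)%:R) ->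
  exists C0, forall V, posdef V -> exists m : 'I_n,
    ln (\det V) <= C0 + w * \sum_i ln (tt V i) + (d%:R - w * n%:R) * ln (tt V m).
Proof.
move=> hw.
pose i0 := Ordinal n_pos.
pose YB (B : {set 'I_n}) : 'M[R]_d := \matrix_(k < d) row (nth i0 (enum B) k) X.
exists (ln (d`!%:R) + \sum_(B : {set 'I_n}) `|ln (\det (YB B) ^+ 2)|).
move=> V pV.
pose s i := ln (tt V i).
pose m := [arg max_(i > i0) s i]%O.
have maxm : forall i, s i <= s m.
  by move=> i; rewrite /m; case: arg_maxP => // j _ h; exact: h.
exists m.
have [B [_ cB rB sB]] := greedy hw (J := [set: 'I_n]) (M := s m) (fun i _ => maxm i).
rewrite rkT cardsT card_ord in cB sB.
have eT : \sum_(i in [set: 'I_n]) s i = \sum_i s i.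
  by apply: eq_bigl => i; rewrite inE.
rewrite eT in sB.
set Y := YB B.
have rowY k : row k Y = row (nth i0 (enum B) k) X by rewrite rowK.
have sizeB : size (enum B) = d by rewrite -cardE cB.
have rankY : \rank Y = d.
  apply/eqP; rewrite eqn_leq rank_leq_row /=.
  rewrite -{1}cB -rB; apply: mxrankS; apply: MJ_sub => i iB.
  have iE : i \in enum B by rewrite mem_enum.
  have ki : (index i (enum B) < d)%N by rewrite -sizeB index_mem.
  rewrite -(nth_index i0 iE) -(rowY (Ordinal ki)) row_sub //.
have unitY : Y \in unitmx by rewrite -row_free_unit /row_free rankY.
have detY0 : \det Y != 0 by rewrite -unitfE -unitmxE.
have hg := det_gram_le Y pV.
have e1 : \det (Y *m V *m Y^T) = \det Y ^+ 2 * \det V.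
  by rewrite !det_mulmx det_tr expr2; ring.
have e2 : \prod_k qf V (row k Y) (row k Y) = \prod_(k < d) tt V (nth i0 (enum B) k).
  by apply: eq_bigr => k _; rewrite rowY.
rewrite e1 e2 in hg.
have dV := posdef_det_gt0 pV.
have Y2 := sqr_pos detY0.
have ttp k : 0 < tt V k by apply: tt_gt0.
have fd : 0 < d`!%:R :> R by rewrite ltr0n fact_gt0.
have pp : 0 < \prod_(k < d) tt V (nth i0 (enum B) k) by apply: prodr_gt0.
have hln : ln (\det Y ^+ 2 * \det V) <= ln (d`!%:R * \prod_(k < d) tt V (nth i0 (enum B) k)).
  by rewrite ler_ln ?posrE; [exact: hg | apply: mulr_gt0 | apply: mulr_gt0].
rewrite lnM ?posrE // in hln; rewrite lnM ?posrE // in hln.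
rewrite ln_prod in hln; last by move=> k _; exact: ttp.
have eB : \sum_(i < d) ln (tt V (nth i0 (enum B) i)) = \sum_(i in B) s i.
  rewrite -[RHS]big_enum [RHS](big_nth i0) sizeB big_mkord.
  by [].
rewrite eB in hln.
have hC : - ln (\det Y ^+ 2) <= \sum_(B0 : {set 'I_n}) `|ln (\det (YB B0) ^+ 2)|.
  have h := le_sum_single (F := fun B0 : {set 'I_n} => (`|ln (\det (YB B0) ^+ 2)| : R)) B (fun _ => normr_ge0 _).
  apply: le_trans h; rewrite -normrN; exact: ler_norm.
rewrite /s in sB hC.
lra.
Qed.

Lemma aa_lt0 : aa < 0.
Proof. by rewrite /aa subr_lt0. Qed.

Lemma FF_sums V : FF V = n%:R / 2 * ln (\det V) + aa * \sum_i ln (tt V i) - \sum_i uu V i.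
Proof. by rewrite /FF sumrB -mulr_sumr addrA. Qed.

Lemma F_upper : exists C p q, [/\ 0 < p, 0 < q & forall V, posdef V -> exists m : 'I_n,
  FF V <= C + (p * \sum_i ln (tt V i) - \sum_i uu V i) + q * ln (tt V m)].
Proof.
have [w [w1 w2 hw]] := exists_w.
have [C0 hC] := lndet_bound hw.
have n0 : 0 < n%:R :> R by rewrite ltr0n n_pos.
exists (n%:R / 2 * C0), (n%:R / 2 * w + aa), (n%:R / 2 * (d%:R - w * n%:R)); split.
- move: w1; rewrite ltr_pdivrMr // /aa => h.
  have : d%:R - 2 * alpha < n%:R * w by rewrite [n%:R * w]mulrC.
  lra.
- by apply: mulr_gt0; [apply: divr_gt0 | rewrite subr_gt0 mulrC].
move=> V pV; have [m hm] := hC V pV; exists m.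
rewrite FF_sums.
set S := \sum_i ln (tt V i); set U := \sum_i uu V i.
set L := ln (\det V); set sm := ln (tt V m).
have h2 : n%:R / 2 * L <= n%:R / 2 * (C0 + w * S + (d%:R - w * n%:R) * sm).
  by rewrite ler_pM2l // divr_gt0.
have e : n%:R / 2 * (C0 + w * S + (d%:R - w * n%:R) * sm) + aa * S - U =
  n%:R / 2 * C0 + ((n%:R / 2 * w + aa) * S - U) + n%:R / 2 * (d%:R - w * n%:R) * sm.
  by ring.
lra.
Qed.

Lemma sum_le_single_plus (g : 'I_n -> R) (K : R) j :
  0 <= K -> (forall i, g i <= K) -> \sum_i g i <= g j + n%:R * K.
Proof.
move=> K0 hg; rewrite (bigD1 j) //= lerD2l.
apply: (@le_trans _ _ (\sum_(i | i != j) K)); first by apply: ler_sum => i _; exact: hg.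
have e : \sum_(i < n) K = K *+ n by rewrite sumr_const card_ord.
rewrite mulr_natl -e [leRHS](bigD1 j) //=; apply: ler_wpDl => //; exact: lexx.
Qed.

Lemma coercive : exists lo hi delta, [/\ 0 < lo, 0 < delta & forall V, posdef V ->
   FF 1%:M <= FF V -> (forall i, lo <= tt V i <= hi) /\ delta <= \det V].
Proof.
have [C [p [q [p0 q0 hC]]]] := F_upper.
have h2 : 0 < 1/2 :> R by rewrite divr_gt0.
have h4 : 0 < 1/4 :> R by rewrite divr_gt0.
have [K1 hK1] := scal_bound q0 h2 be0 b0.
have [K2 hK2] := scal_bound p0 h2 be0 b0.
have [K3 hK3] := scal_bound p0 h4 be0 b0.
have n0 : 0 < n%:R :> R by rewrite ltr0n n_pos.
set K2' := Num.max K2 0.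
have K2'0 : 0 <= K2' by rewrite le_max lexx orbT.
have K2K2' : K2 <= K2' by rewrite le_max lexx.
set f1 := FF 1%:M.
set L := f1 - C - K1 - n%:R * K2'.
set lo := expR (L / p).
exists lo, (b * expR (ln (4 * (K3 - L)) / beta)),
  (expR (2 / n%:R * (f1 - n%:R * aa * ln lo))); split; try exact: expR_gt0.
move=> V pV hF.
have [m hm] := hC V pV.
have tpos i : 0 < tt V i by apply: tt_gt0.
have upos i : 0 < uu V i by apply: uu_gt0.
pose g i := p * ln (tt V i) - 1/2 * uu V i.
have hsum : FF V <= C + K1 + \sum_i g i.
  have := hK1 _ (tpos m); rewrite -/(uu V m) => k1.
  have um : uu V m <= \sum_i uu V i.
    exact: (le_sum_single (F := fun i => uu V i)) (fun i => ltW (upos i)).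
  have eg : \sum_i g i = p * \sum_i ln (tt V i) - 1/2 * \sum_i uu V i.
    by rewrite /g sumrB -!mulr_sumr.
  rewrite eg; lra.
have hg j : L <= g j.
  have hs : \sum_i g i <= g j + n%:R * K2'.
    by apply: sum_le_single_plus => // i; apply: le_trans (hK2 _ (tpos i)) K2K2'.
  rewrite /L; lra.
split.
  move=> i; apply/andP; split.
    have hgi := hg i; rewrite /g in hgi.
    have : L <= p * ln (tt V i).
      by apply: le_trans hgi _; rewrite lerBlDr lerDl mulr_ge0 // ltW.
    rewrite -ler_pdivrMl // => hl.
    rewrite /lo -[tt V i]lnK ?posrE // ler_expR.
    by rewrite mulrC.
  have hgi := hg i; rewrite /g in hgi.
  have k3 := hK3 _ (tpos i); rewrite -/(uu V i) in k3.
  have hu : uu V i <= 4 * (K3 - L) by lra.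
  have hu0 : 0 < 4 * (K3 - L) by apply: lt_le_trans hu.
  have : ln (uu V i) <= ln (4 * (K3 - L)) by rewrite ler_ln ?posrE.
  rewrite /uu expRK -ler_pdivlMl // => hl.
  have tb : tt V i / b <= expR (ln (4 * (K3 - L)) / beta).
    rewrite -[tt V i / b]lnK; last by rewrite posrE divr_gt0.
    by rewrite ler_expR [_ / beta]mulrC.
  by rewrite -ler_pdivrMl // mulrC.
have lo_le i : ln lo <= ln (tt V i).
  have hgi := hg i; rewrite /g in hgi.
  have : L <= p * ln (tt V i).
    by apply: le_trans hgi _; rewrite lerBlDr lerDl mulr_ge0 // ltW.
  by rewrite -ler_pdivrMl // /lo expRK mulrC.
have hS : n%:R * ln lo <= \sum_i ln (tt V i).
  have e : \sum_(i < n) ln lo = n%:R * ln lo by rewrite sumr_const card_ord mulr_natl.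
  by rewrite -e; apply: ler_sum => i _; exact: lo_le.
have haS : aa * \sum_i ln (tt V i) <= aa * (n%:R * ln lo).
  by rewrite ler_wnM2l // ltW // aa_lt0.
have U0 : 0 <= \sum_i uu V i by apply: sumr_ge0 => i _; exact: ltW.
move: hF; rewrite FF_sums -/f1 => hF.
have h1 : f1 - n%:R * aa * ln lo <= n%:R / 2 * ln (\det V).
  have e : aa * (n%:R * ln lo) = n%:R * aa * ln lo by ring.
  lra.
have dV := posdef_det_gt0 pV.
rewrite -[\det V]lnK ?posrE // ler_expR.
have e : ln (\det V) = 2 / n%:R * (n%:R / 2 * ln (\det V)).
  by field; rewrite gt_eqF.
by rewrite [X in _ <= X]e ler_pM2l // divr_gt0.
Qed.

Lemma entry_bound hi : 0 <= hi -> exists Bd, forall V, posdef V ->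
  (forall i, tt V i <= hi) -> forall k l, `|V k l| <= Bd.
Proof.
move=> hi0.
have : row_full X by rewrite /row_full rX.
case/row_fullP => C hCX.
set cs := \sum_k \sum_i `|C k i|.
have Ccs k i : `|C k i| <= cs.
  apply: le_trans (le_sum_single (F := fun i => `|C k i|) i (fun _ => normr_ge0 _)) _.
  exact: (le_sum_single (F := fun k => \sum_i `|C k i|) k (fun _ => sumr_ge0 _ (fun _ _ => normr_ge0 _))).
have cs0 : 0 <= cs by apply: sumr_ge0 => k _; apply: sumr_ge0 => i _.
exists (n%:R * (n%:R * (cs * hi) * cs)) => V pV ht k l.
have eV : V = C *m (X *m V *m X^T) *m C^T.
  by rewrite !mulmxA hCX mul1mx -mulmxA -trmx_mul hCX trmx1 mulmx1.
have G i j : (X *m V *m X^T) i j = qf V (row i X) (row j X).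
  by rewrite /qf -row_mul !mxE; apply: eq_bigr => r _; rewrite !mxE.
have Gb i j : `|qf V (row i X) (row j X)| <= hi.
  have h := posdef_CS (row i X) (row j X) pV.
  have h2 : qf V (row i X) (row j X) ^+ 2 <= hi ^+ 2.
    apply: le_trans h _; rewrite expr2; apply: ler_pM => //.
    - exact: posdef_ge0.
    - exact: posdef_ge0.
    - exact: ht.
    - exact: ht.
  by rewrite -(ler_pXn2r (n := 2)) ?nnegrE // real_normK ?num_real.
rewrite eV mxE.
apply: le_trans (ler_norm_sum _ _ _) _.
have e : n%:R * (n%:R * (cs * hi) * cs) = \sum_(j < n) (n%:R * (cs * hi) * cs).
  by rewrite sumr_const card_ord mulr_natl.
rewrite e; apply: ler_sum => j _.
rewrite mxE normrM; apply: ler_pM => //; last by rewrite mxE Ccs.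
apply: le_trans (ler_norm_sum _ _ _) _.
have e2 : n%:R * (cs * hi) = \sum_(i < n) (cs * hi).
  by rewrite sumr_const card_ord mulr_natl.
rewrite e2; apply: ler_sum => i _.
rewrite normrM G; apply: ler_pM => //.
Qed.

Local Notation U := ('rV[R]_(d * d)).

Definition FU (u : U) := FF (vec_mx u).

Lemma cont_entry k l : continuous (fun u : U => vec_mx u k l).
Proof.
rewrite (_ : (fun u : U => vec_mx u k l) = (fun u : U => u 0 (mxvec_index k l))).
  exact: coord_continuous.
by apply: funext => u; rewrite mxE.
Qed.

Lemma cont_qf (v w : 'rV[R]_d) : continuous (fun u : U => qf (vec_mx u) v w).
Proof.
rewrite (_ : (fun u : U => qf (vec_mx u) v w) =
  (fun u : U => \sum_j (\sum_i v 0 i * vec_mx u i j) * w 0 j)); last first.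
  apply: funext => u; rewrite /qf !mxE; apply: eq_bigr => j _; rewrite !mxE.
  by congr (_ * _); apply: eq_bigr => i _; rewrite !mxE.
move=> x; apply: cont_sum => j; apply: continuousM; last exact: cst_continuous.
by apply: cont_sum => i; apply: cont_scale; exact: cont_entry.
Qed.

Lemma cont_det : continuous (fun u : U => \det (vec_mx u)).
Proof.
rewrite (_ : (fun u : U => \det (vec_mx u)) =
  (fun u : U => \sum_(s : 'S_d) (-1) ^+ s * \prod_i vec_mx u i (s i))); last first.
  by apply: funext => u; rewrite [\det _]/determinant.
move=> x; apply: cont_sum => s; apply: cont_scale.
by apply: cont_prod => i; exact: cont_entry.
Qed.

Lemma cont_FU u : posdef (vec_mx u) -> {for u, continuous FU}.
Proof.
move=> pV.
rewrite /FU /FF.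
apply: continuousD.
  apply: cont_scale; apply: cont_ln; first exact: cont_det.
  exact: posdef_det_gt0.
apply: cont_sum => i.
have ct : {for u, continuous (fun u : U => tt (vec_mx u) i)} by apply: cont_qf.
have tp : 0 < tt (vec_mx u) i by apply: tt_gt0.
apply: continuousB.
  by apply: cont_scale; apply: cont_ln.
apply: cont_expR; apply: cont_scale; apply: cont_ln.
  by apply: continuousM => //; exact: cst_continuous.
by rewrite divr_gt0.
Qed.

Lemma main_result : exists S : 'M[R]_d, posdef S /\
  forall T : 'M[R]_d, posdef T ->
    kotz_loglik alpha b beta X T <= kotz_loglik alpha b beta X S.
Proof.
have [lo [hi [delta [lo0 de0 hco]]]] := coercive.
have i0 : 'I_n := Ordinal n_pos.
have hi0 : 0 <= hi.
  have [h _] := hco _ (posdef1 R d) (lexx _).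
  by have /andP[h1 h2] := h i0; apply: le_trans h2; apply: le_trans h1; exact: ltW.
have [Bd hBd] := entry_bound hi0.
pose K1 := [set u : U | forall kl : 'I_d * 'I_d,
  0 <= vec_mx u kl.1 kl.2 - vec_mx u kl.2 kl.1]%classic.
pose K2 := [set u : U | forall v : 'rV[R]_d, 0 <= qf (vec_mx u) v v]%classic.
pose K3 := [set u : U | forall _ : unit, 0 <= \det (vec_mx u) - delta]%classic.
pose K4 := [set u : U | forall kl : 'I_d * 'I_d, 0 <= Bd - `|vec_mx u kl.1 kl.2|]%classic.
pose K := (K1 `&` K2 `&` K3 `&` K4)%classic.
have Kpd u : K u -> posdef (vec_mx u).
  move=> [[[h1 h2] h3] h4]; apply: psd_unit_posdef => //.
  - apply/matrixP => k l; rewrite mxE; apply/eqP; rewrite eq_le.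
    have := h1 (k, l); have := h1 (l, k); rewrite /= !subr_ge0 => -> ->.
    by [].
  - rewrite unitmxE unitfE; apply: lt0r_neq0.
    by have := h3 Datatypes.tt; rewrite subr_ge0; apply: lt_le_trans.
have inK V : posdef V -> FF 1%:M <= FF V -> K (mxvec V).
  move=> pV hF; have [ht hd] := hco V pV hF.
  rewrite /K /K1 /K2 /K3 /K4 /= !mxvecK; split; [split; [split|]|].
  - move=> [k l] /=; case: pV => VT _.
    by rewrite -{1}VT mxE subrr.
  - by move=> v; apply: posdef_ge0.
  - by move=> _; rewrite subr_ge0.
  - move=> [k l] /=; rewrite subr_ge0; apply: hBd => // i.
    by have /andP[] := ht i.
have K0 : (K !=set0)%classic.
  by exists (mxvec 1%:M); apply: inK; [exact: posdef1 | exact: lexx].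
have cK : compact K.
  apply: bounded_closed_compact.
    have Bd0 : 0 <= Bd.
      case: K0 => u [_ h4]; have := h4 (Ordinal d_pos, Ordinal d_pos).
      by rewrite subr_ge0; apply: le_trans.
    apply: filterS (nbhs_pinfty_gt (num_real Bd)) => M BdM u [_ Ku].
    apply: le_trans (ltW BdM); rewrite [leLHS]/Num.norm /= mx_normrE.
    apply/bigmax_leP; split => // -[i j] _ /=.
    rewrite (ord1 i); case/mxvec_indexP: j => k l.
    have := Ku (k, l); rewrite subr_ge0 /= mxE.
    by [].
  repeat apply: closedI; apply: closed_ge0.
  - by move=> kl; move=> x; apply: continuousB; exact: cont_entry.
  - by move=> v; exact: cont_qf.
  - move=> _ x /=; apply: (@continuousB _ _ _ (fun u : U => \det (vec_mx u)) (fun=> delta)); [exact: cont_det | exact: cst_continuous].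
  - move=> kl x /=; apply: (@continuousB _ _ _ (fun=> Bd) (fun u : U => `|vec_mx u kl.1 kl.2|)); first exact: cst_continuous.
    by apply: cont_norm; exact: cont_entry.
have cF : {within K, continuous FU}%classic.
  rewrite continuous_subspace_in => u; rewrite inE => Ku.
  by apply: continuous_subspaceT_for => //; apply: cont_FU; exact: Kpd.
have [c cK' cmax] := compact_EVT_max K0 cK cF.
rewrite inE in cK'.
have pc := Kpd _ cK'.
exists (invmx (vec_mx c)); split; first exact: posdef_inv.
move=> T pT.
rewrite !loglik_F //; last exact: posdef_inv.
rewrite invmxK.
have pV := posdef_inv pT.
have [hF|hF] := leP (FF 1%:M) (FF (invmx T)).
  have := cmax (mxvec (invmx T)); rewrite inE => /(_ (inK _ pV hF)).
  by rewrite /FU mxvecK.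
apply: le_trans (ltW hF) _.
have := cmax (mxvec 1%:M); rewrite inE => /(_ (inK _ (posdef1 R d) (lexx _))).
by rewrite /FU mxvecK.
Qed.

End Main.

End Aux.

Theorem theorem45 (R : realType) (d n : nat) (alpha b beta : R)
  (X : 'M[R]_(n, d)) :
  0 < alpha -> 0 < b -> 0 < beta -> alpha < d%:R / 2 ->
  (forall i : 'I_n, row i X != 0) ->
  \rank X = d ->
  (forall L : 'M[R]_d, (1 <= \rank L)%N -> (\rank L < d)%N ->
     #|[set i : 'I_n | (row i X <= L)%MS]|%:R / n%:R
       < (\rank L)%:R / (d%:R - 2 * alpha)) ->
  exists S : 'M[R]_d, posdef S /\
    forall T : 'M[R]_d, posdef T ->
      kotz_loglik alpha b beta X T <= kotz_loglik alpha b beta X S.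
Proof.
move=> a0 b0 be0 ad rX0 rX hL.
exact: (Aux.main_result a0 b0 be0 ad rX0 rX hL).
Qed.
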